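(* Let $\{(\mathbf{x}^{(i)},y^{(i)})\}_{i=1}^n$ with $\|\mathbf{x}^{(i)}\|_2\le1$, $y^{(i)}\in\{-1,1\}$, and suppose there is $\mathbf{w}^*$ with $\|\mathbf{w}^*\|_2=1$ and $\min_iy^{(i)}\mathbf{x}^{(i)\top}\mathbf{w}^*=\gamma>0$. Let $A$ have rows $y^{(i)}\mathbf{x}^{(i)\top}$ and $\alpha_t=t$. Let $\mathbf{v}_T$ be produced by the Accelerated Perceptron: $\mathbf{q}_0=\tfrac{\mathbf{1}}{n}$, $\mathbf{v}_0=\mathbf{g}_0=\mathbf{0}$, and for $t=1,\dots,T$: $\mathbf{v}_t=\mathbf{v}_{t-1}-\frac{t}{2(t+1)}(\mathbf{g}_{t-1}-A^{\top}\mathbf{q}_{t-1})$, $q_{t,i}=\frac{\exp(-y^{(i)}\mathbf{v}_t^{\top}\mathbf{x}^{(i)})}{\sum_j\exp(-y^{(j)}\mathbf{v}_t^{\top}\mathbf{x}^{(j)})}$, $\mathbf{g}_t=\frac{t}{t+1}(\mathbf{g}_{t-1}-A^{\top}\mathbf{q}_t)$. Let also the game dynamics be: $g(\mathbf{w},\mathbf{p})=\mathbf{p}^{\top}A\mathbf{w}-\tfrac12\|\mathbf{w}\|_2^2$, $\mathbf{p}_0=\tfrac{\mathbf{1}}{n}$, $h_j(\mathbf{w})=-g(\mathbf{w},\mathbf{p}_j)$, $\ell_j(\mathbf{p})=g(\mathbf{w}_j,\mathbf{p})$, $\mathbf{w}_t=\arg\min_{\mathbf{w}\in\mathbb{R}^d}\sum_{j=1}^{t-1}\alpha_jh_j(\mathbf{w})+\alpha_th_{t-1}(\mathbf{w})$,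 $\mathbf{p}_t=\arg\min_{\mathbf{p}\in\Delta^n}\tfrac14\sum_{s=1}^t\alpha_s\ell_s(\mathbf{p})+D_E(\mathbf{p},\tfrac{\mathbf{1}}{n})$ for $t=1,\dots,T$, $\overline{\mathbf{w}}_T=\frac{\sum_t\alpha_t\mathbf{w}_t}{\sum_t\alpha_t}$, with weighted regrets $R^{\mathbf{w}}=\sum_{t=1}^T\alpha_th_t(\mathbf{w}_t)-\min_{\mathbf{w}\in\mathbb{R}^d}\sum_{t=1}^T\alpha_th_t(\mathbf{w})$, $R^{\mathbf{p}}=\sum_{t=1}^T\alpha_t\ell_t(\mathbf{p}_t)-\min_{\mathbf{p}\in\Delta^n}\sum_{t=1}^T\alpha_t\ell_t(\mathbf{p})$. Then $R^{\mathbf{w}}\le2\sum_{t=1}^T\|\mathbf{p}_t-\mathbf{p}_{t-1}\|_1^2$, $R^{\mathbf{p}}\le4\log n-2\sum_{t=1}^T\|\mathbf{p}_t-\mathbf{p}_{t-1}\|_1^2$; there is a universal constant $C>0$ such that $\overline{\mathbf{w}}_T$ has non-negative margin ($\min_iy^{(i)}\mathbf{x}^{(i)\top}\overline{\mathbf{w}}_T\ge0$) whenever $T\ge C\sqrt{\log n}/\gamma$; and the normalized margin satisfies $\overline{\gamma}(\mathbf{v}_T)=\Omega\!\left(\gamma-\frac{8\log n}{\gamma T(T+1)}\right)$.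
   Context: $\Delta^n$ is the probability simplex; $\mathbf{1}$ the all-ones vector; $D_E(\mathbf{p},\mathbf{q})=\sum_ip_i\log(p_i/q_i)$. The normalized margin of $\mathbf{v}\ne\mathbf{0}$ is $\overline{\gamma}(\mathbf{v})=\frac{\min_{\mathbf{p}\in\Delta^n}\mathbf{p}^{\top}A\mathbf{v}}{\|\mathbf{v}\|_2}=\frac{\min_iy^{(i)}\mathbf{x}^{(i)\top}\mathbf{v}}{\|\mathbf{v}\|_2}$. *)

(* Defs.v *)
From HB Require Import structures.
From mathcomp Require Import all_boot all_order all_algebra.
From mathcomp Require Import all_classical all_reals all_analysis.
Set Implicit Arguments. Unset Strict Implicit. Unset Printing Implicit Defensive.
Import Order.TTheory GRing.Theory Num.Theory.
Local Open Scope ring_scope.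
Local Open Scope classical_set_scope.

Section Defs.
Variable R : realType.

Definition dotv (m : nat) (u v : 'rV[R]_m) : R := \sum_(k < m) u ord0 k * v ord0 k.
Definition norm2 (m : nat) (u : 'rV[R]_m) : R := Num.sqrt (dotv u u).
Definition norm1 (m : nat) (u : 'rV[R]_m) : R := \sum_(k < m) `|u ord0 k|.

Definition simplex (n : nat) : set 'rV[R]_n :=
  [set p | (forall i, 0 <= p ord0 i) /\ \sum_(i < n) p ord0 i = 1].
Arguments simplex : clear implicits.
Definition unif (n : nat) : 'rV[R]_n := const_mx (n%:R^-1).

(* relative entropy D_E(p,q) = sum_i p_i log(p_i/q_i), convention 0 log 0 = 0 *)
Definition KL (n : nat) (p q : 'rV[R]_n) : R :=
  \sum_(i < n) (if p ord0 i == 0 then 0 else p ord0 i * ln (p ord0 i / q ord0 i)).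

Definition data_matrix n d (x : 'I_n -> 'rV[R]_d) (y : 'I_n -> R) : 'M[R]_(n, d) :=
  \matrix_(i, k) (y i * x i ord0 k).

Definition minmargin n d (x : 'I_n -> 'rV[R]_d) (y : 'I_n -> R) (v : 'rV[R]_d) : R :=
  inf [set y i * dotv (x i) v | i in [set: 'I_n]].
Definition nmargin n d (x : 'I_n -> 'rV[R]_d) (y : 'I_n -> R) (v : 'rV[R]_d) : R :=
  minmargin x y v / norm2 v.

Definition data_ok n d (x : 'I_n -> 'rV[R]_d) (y : 'I_n -> R) (wstar : 'rV[R]_d)
    (gamma : R) : Prop :=
  [/\ (forall i, norm2 (x i) <= 1), (forall i, y i = 1 \/ y i = -1),
      norm2 wstar = 1, minmargin x y wstar = gamma & 0 < gamma].

(* g(w,p) = p^T A w - 1/2 ||w||^2 ;  A^T p is the row vector p *m A *)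
Definition gpay n d (A : 'M[R]_(n, d)) (w : 'rV[R]_d) (p : 'rV[R]_n) : R :=
  dotv (p *m A) w - 2^-1 * norm2 w ^+ 2.

(* weights alpha_t = t *)
Definition obj_w n d (A : 'M[R]_(n, d)) (p : nat -> 'rV[R]_n) (t : nat)
    (w : 'rV[R]_d) : R :=
  \sum_(1 <= j < t) j%:R * (- gpay A w (p j)) + t%:R * (- gpay A w (p t.-1)).

Definition obj_p n d (A : 'M[R]_(n, d)) (w : nat -> 'rV[R]_d) (t : nat)
    (p : 'rV[R]_n) : R :=
  4^-1 * (\sum_(1 <= s < t.+1) s%:R * gpay A (w s) p) + KL p (unif n).

Definition game_dynamics n d (A : 'M[R]_(n, d)) (T : nat)
    (w : nat -> 'rV[R]_d) (p : nat -> 'rV[R]_n) : Prop :=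
  p 0%N = unif n /\
  forall t, (1 <= t <= T)%N ->
    [/\ (forall w' : 'rV[R]_d, obj_w A p t (w t) <= obj_w A p t w'),
        simplex n (p t) &
        (forall p' : 'rV[R]_n, simplex n p' -> obj_p A w t (p t) <= obj_p A w t p')].

Definition wbar d (T : nat) (w : nat -> 'rV[R]_d) : 'rV[R]_d :=
  (\sum_(1 <= t < T.+1) (t%:R : R))^-1 *: \sum_(1 <= t < T.+1) t%:R *: w t.

Definition regret_w n d (A : 'M[R]_(n, d)) (T : nat)
    (w : nat -> 'rV[R]_d) (p : nat -> 'rV[R]_n) : R :=
  \sum_(1 <= t < T.+1) t%:R * (- gpay A (w t) (p t))
  - inf (range (fun w' : 'rV[R]_d => \sum_(1 <= t < T.+1) t%:R * (- gpay A w' (p t)))).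

Definition regret_p n d (A : 'M[R]_(n, d)) (T : nat)
    (w : nat -> 'rV[R]_d) (p : nat -> 'rV[R]_n) : R :=
  \sum_(1 <= t < T.+1) t%:R * gpay A (w t) (p t)
  - inf [set \sum_(1 <= t < T.+1) t%:R * gpay A (w t) p' | p' in simplex n].

Definition path_len n (T : nat) (p : nat -> 'rV[R]_n) : R :=
  \sum_(1 <= t < T.+1) norm1 (p t - p t.-1) ^+ 2.

Definition qexp n d (x : 'I_n -> 'rV[R]_d) (y : 'I_n -> R) (v : 'rV[R]_d) : 'rV[R]_n :=
  \row_i (expR (- y i * dotv v (x i)) / \sum_(j < n) expR (- y j * dotv v (x j))).

Definition accel_perceptron n d (x : 'I_n -> 'rV[R]_d) (y : 'I_n -> R) (T : nat)
    (v : nat -> 'rV[R]_d) (q : nat -> 'rV[R]_n) (g : nat -> 'rV[R]_d) : Prop :=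
  [/\ q 0%N = unif n, v 0%N = 0, g 0%N = 0 &
   forall t, (1 <= t <= T)%N ->
     [/\ v t = v t.-1 - (t%:R / (2 * t.+1%:R)) *: (g t.-1 - q t.-1 *m data_matrix x y),
         q t = qexp x y (v t) &
         g t = (t%:R / t.+1%:R) *: (g t.-1 - q t *m data_matrix x y)]].

End Defs.

(* Main.v *)
Require Import Defs.
From HB Require Import structures.
From mathcomp Require Import all_boot all_order all_algebra.
From mathcomp Require Import all_classical all_reals all_analysis.
From mathcomp Require Import ring lra.
Set Implicit Arguments. Unset Strict Implicit. Unset Printing Implicit Defensive.
Import Order.TTheory GRing.Theory Num.Theory.
Local Open Scope ring_scope.
Local Open Scope classical_set_scope.
Section Calc.
Variable R : realType.

Lemma mvt_pos (f df : R -> R) (a b : R) :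
  (forall x : R, 0 < x -> is_derive x (1:R) f (df x)) -> 0 < a -> a < b ->
  exists2 c, a < c < b & f b - f a = df c * (b - a).
Proof.
move=> hd a0 ab.
have h1 : forall x, x \in `]a, b[%R -> is_derive x 1 f (df x).
  move=> x; rewrite in_itv /= => /andP[ax _]; apply: hd; lra.
have h2 : {in `[a, b]%R, forall x, derivable f x 1}.
  move=> x; rewrite in_itv /= => /andP[ax _].
  have {}h : is_derive x 1 f (df x) by apply: hd; lra.
  exact: ex_derive.
have [c cab ->] := @MVT R f df a b ab h1 (derivable_within_continuous h2).
by exists c => //; move: cab; rewrite in_itv.
Qed.

Lemma ln_ge_1V {x : R} : 0 < x -> 1 - x^-1 <= ln x.
Proof.
move=> x0; have H : -1 < x^-1 - 1 by have := x0; rewrite -invr_gt0; lra.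
have h := le_ln1Dx H.
have e : 1 + (x^-1 - 1) = x^-1 by rewrite addrC subrK.
rewrite e lnV ?posrE // in h; lra.
Qed.

Definition Hf : R -> R := ((id + cst 1 : R -> R) * (@ln R : R -> R)) - ((2:R) \*: (id - cst 1 : R -> R)).
Definition dHf (x : R) := ln x + (x + 1) / x - 2.

Lemma HfE (x : R) : Hf x = (x + 1) * ln x - 2 * (x - 1).
Proof. by []. Qed.

Lemma dH (x : R) : 0 < x -> is_derive x 1 Hf (dHf x).
Proof.
move=> x0.
have h1 : is_derive x 1 (id + cst 1 : R -> R) (1 + 0) by apply: is_deriveD.
have h2 : is_derive x 1 (@ln R) x^-1 by apply: is_derive1_ln.
have h3 := is_deriveM h1 h2.
have h4 : is_derive x 1 (id - cst 1 : R -> R) (1 - 0) by apply: is_deriveB.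
have h5 := is_deriveZ 2 h4.
rewrite /Hf; apply: (is_derive_eq (is_deriveB h3 h5)).
rewrite /dHf /= /GRing.scale /=.
have -> : (id + cst 1) x = x + 1 by [].
ring.
Qed.

Lemma dHf_ge0 {x : R} : 0 < x -> 0 <= dHf x.
Proof.
move=> x0; have := ln_ge_1V x0; rewrite /dHf.
have -> : (x + 1) / x = 1 + x^-1 by rewrite mulrDl divff ?gt_eqF // mul1r.
lra.
Qed.

Lemma Hf1 : Hf 1 = 0.
Proof. by rewrite HfE ln1; ring. Qed.

Lemma Hf_sign {x : R} : 0 < x -> 0 <= (x - 1) * Hf x.
Proof.
move=> x0; case: (ltrgtP x 1) => hx.
- have [c /andP[c1 c2] e] := @mvt_pos Hf dHf x 1 dH x0 hx.
  have := dHf_ge0 (lt_trans x0 c1); rewrite Hf1 in e.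
  move=> hc; have : 0 <= dHf c * (1 - x) by apply: mulr_ge0 => //; lra.
  rewrite -e => h; apply: mulr_le0; lra.
- have [c /andP[c1 c2] e] := @mvt_pos Hf dHf 1 x dH ltr01 hx.
  have := dHf_ge0 (lt_trans ltr01 c1); rewrite Hf1 in e.
  move=> hc; have : 0 <= dHf c * (x - 1) by apply: mulr_ge0 => //; lra.
  rewrite -e => h; apply: mulr_ge0; lra.
- by rewrite hx subrr mul0r.
Qed.

Definition Gf : R -> R := ((2:R) \*: (id * (id + cst 2 : R -> R)) : R -> R) * (@ln R : R -> R)
   - ((id - cst 1 : R -> R) * ((5:R) \*: (id : R -> R) + cst 1 : R -> R)).

Lemma GfE (x : R) : Gf x = 2 * (x * (x + 2)) * ln x - (x - 1) * (5 * x + 1).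
Proof. by []. Qed.

Lemma dG (x : R) : 0 < x -> is_derive x 1 Gf (4 * Hf x).
Proof.
move=> x0.
have h1 : is_derive x 1 (id + cst 2 : R -> R) (1 + 0) by apply: is_deriveD.
have h1' := is_deriveM (@is_derive_id _ _ x 1) h1.
have h1'' := is_deriveZ 2 h1'.
have h2 : is_derive x 1 (@ln R) x^-1 by apply: is_derive1_ln.
have h3 := is_deriveM h1'' h2.
have h4 : is_derive x 1 (id - cst 1 : R -> R) (1 - 0) by apply: is_deriveB.
have h5 := is_deriveZ 5 (@is_derive_id _ _ x 1).
have h6 := is_deriveD h5 (@is_derive_cst _ R^o R^o (1:R) x 1).
have h7 := is_deriveM h4 h6.
rewrite /Gf; apply: (is_derive_eq (is_deriveB h3 h7)).
rewrite HfE /= /GRing.scale /=.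
have -> : (id + cst 2) x = x + 2 by [].
have -> : (id - cst 1) x = x - 1 by [].
have -> : ((5:R) \*: (id : R -> R) + cst 1) x = 5 * x + 1 by [].
have -> : (id * (id + cst 2)) x = x * (x + 2) by [].
field; exact: lt0r_neq0.
Qed.

Lemma Gf1 : Gf 1 = 0.
Proof. by rewrite GfE ln1; ring. Qed.

Lemma Gf_ge0 {x : R} : 0 < x -> 0 <= Gf x.
Proof.
move=> x0; case: (ltrgtP x 1) => hx.
- have [c /andP[c1 c2] e] := @mvt_pos Gf (fun x => 4 * Hf x) x 1 dG x0 hx.
  have := Hf_sign (lt_trans x0 c1); rewrite Gf1 in e.
  move=> hc.
  have hc' : Hf c <= 0.
    rewrite leNgt; apply/negP => hh.
    nra.
  have : 4 * Hf c * (1 - x) <= 0 by apply: mulr_le0_ge0 => //; lra.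
  lra.
- have [c /andP[c1 c2] e] := @mvt_pos Gf (fun x => 4 * Hf x) 1 x dG ltr01 hx.
  have := Hf_sign (lt_trans ltr01 c1); rewrite Gf1 in e.
  move=> hc.
  have hc' : 0 <= Hf c.
    rewrite leNgt; apply/negP => hh.
    nra.
  have : 0 <= 4 * Hf c * (x - 1) by apply: mulr_ge0 => //; lra.
  lra.
- by rewrite hx Gf1.
Qed.

Lemma pinsker_term (p q : R) : 0 < p -> 0 < q ->
  3 * (p - q) ^+ 2 / (2 * (p + 2 * q)) <= p * ln (p / q) - p + q.
Proof.
move=> p0 q0.
have x0 : 0 < p / q by apply: divr_gt0.
have := Gf_ge0 x0; rewrite GfE => h.
set L := ln (p / q) in h *.
have hq : q ^+ 2 * (2 * (p / q * (p / q + 2)) * L - (p / q - 1) * (5 * (p / q) + 1))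
   = 2 * (p * (p + 2 * q)) * L - (p - q) * (5 * p + q).
  by field; exact: lt0r_neq0.
have h2 : 0 <= 2 * (p * (p + 2 * q)) * L - (p - q) * (5 * p + q).
  by rewrite -hq; apply: mulr_ge0 => //; exact: sqr_ge0.
have w0 : 0 < 2 * (p + 2 * q) by lra.
rewrite ler_pdivrMr //.
have -> : (p * L - p + q) * (2 * (p + 2 * q)) =
  (2 * (p * (p + 2 * q)) * L - (p - q) * (5 * p + q)) + 3 * (p - q) ^+ 2 by ring.
lra.
Qed.

Lemma cs_term (d w l : R) : 0 < w -> 0 < l -> 2 * `|d| <= l * (d ^+ 2 / w) + w / l.
Proof.
move=> w0 l0.
have h : 0 <= (l * `|d| - w) ^+ 2 by exact: sqr_ge0.
have e : l * (d ^+ 2 / w) + w / l - 2 * `|d| = (l * `|d| - w) ^+ 2 / (l * w).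
  rewrite -[d ^+ 2](real_normK (num_real d)); field; apply/andP; split; exact: lt0r_neq0.
rewrite -subr_ge0 e; apply: divr_ge0 => //; apply: mulr_ge0; exact: ltW.
Qed.

End Calc.
Section Vec.
Variable R : realType.
Implicit Types (m : nat).

Lemma dotvC {m : nat} (u v : 'rV[R]_m) : dotv u v = dotv v u.
Proof. by apply: eq_bigr => k _; rewrite mulrC. Qed.
Lemma dotvDl {m : nat} (u v w : 'rV[R]_m) : dotv (u + v) w = dotv u w + dotv v w.
Proof. by rewrite /dotv -big_split; apply: eq_bigr => k _; rewrite mxE mulrDl. Qed.
Lemma dotvZl {m : nat} a (u w : 'rV[R]_m) : dotv (a *: u) w = a * dotv u w.
Proof. by rewrite /dotv mulr_sumr; apply: eq_bigr => k _; rewrite mxE mulrA. Qed.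
Lemma dotvNl {m : nat} (u w : 'rV[R]_m) : dotv (- u) w = - dotv u w.
Proof. by rewrite -scaleN1r dotvZl mulN1r. Qed.
Lemma dotvBl {m : nat} (u v w : 'rV[R]_m) : dotv (u - v) w = dotv u w - dotv v w.
Proof. by rewrite dotvDl dotvNl. Qed.
Lemma dotv0l {m : nat} (w : 'rV[R]_m) : dotv 0 w = 0.
Proof. by rewrite /dotv big1 // => k _; rewrite mxE mul0r. Qed.
Lemma dotvDr {m : nat} (u v w : 'rV[R]_m) : dotv w (u + v) = dotv w u + dotv w v.
Proof. by rewrite dotvC dotvDl !(dotvC w). Qed.
Lemma dotvZr {m : nat} a (u w : 'rV[R]_m) : dotv w (a *: u) = a * dotv w u.
Proof. by rewrite dotvC dotvZl dotvC. Qed.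
Lemma dotvNr {m : nat} (u w : 'rV[R]_m) : dotv w (- u) = - dotv w u.
Proof. by rewrite dotvC dotvNl dotvC. Qed.
Lemma dotvBr {m : nat} (u v w : 'rV[R]_m) : dotv w (u - v) = dotv w u - dotv w v.
Proof. by rewrite dotvDr dotvNr. Qed.
Lemma dotv0r {m : nat} (w : 'rV[R]_m) : dotv w 0 = 0.
Proof. by rewrite dotvC dotv0l. Qed.
Lemma dotv_suml {m : nat} (I : Type) (r : seq I) (P : pred I) (F : I -> 'rV[R]_m) w :
  dotv (\sum_(i <- r | P i) F i) w = \sum_(i <- r | P i) dotv (F i) w.
Proof.
elim/big_rec2: _ => [|i y1 y2 _ <-]; first exact: dotv0l.
by rewrite dotvDl.
Qed.
Lemma dotv_sumr {m : nat} (I : Type) (r : seq I) (P : pred I) (F : I -> 'rV[R]_m) w :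
  dotv w (\sum_(i <- r | P i) F i) = \sum_(i <- r | P i) dotv w (F i).
Proof. by rewrite dotvC dotv_suml; apply: eq_bigr => i _; rewrite dotvC. Qed.

Lemma dotv_ge0 {m : nat} (u : 'rV[R]_m) : 0 <= dotv u u.
Proof. by apply: sumr_ge0 => k _; rewrite -expr2 sqr_ge0. Qed.

Lemma dotv_eq0 {m : nat} (u : 'rV[R]_m) : dotv u u = 0 -> u = 0.
Proof.
move=> /eqP; rewrite /dotv psumr_eq0 => [/allP h|k _]; last by rewrite -expr2 sqr_ge0.
apply/rowP => k; rewrite mxE; apply/eqP.
by have := h k (mem_index_enum _); rewrite /= -expr2 sqrf_eq0.
Qed.

Lemma norm2_sq {m : nat} (u : 'rV[R]_m) : norm2 u ^+ 2 = dotv u u.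
Proof. by rewrite /norm2 sqr_sqrtr // dotv_ge0. Qed.

Lemma norm2_ge0 {m : nat} (u : 'rV[R]_m) : 0 <= norm2 u.
Proof. exact: sqrtr_ge0. Qed.

Lemma dotv_2le {m : nat} (u v : 'rV[R]_m) : 2 * dotv u v <= dotv u u + dotv v v.
Proof.
have := dotv_ge0 (u - v); rewrite !dotvBl !dotvBr (dotvC v u); lra.
Qed.
Lemma dotv_2leN {m : nat} (u v : 'rV[R]_m) : - (2 * dotv u v) <= dotv u u + dotv v v.
Proof.
have := dotv_ge0 (u + v); rewrite !dotvDl !dotvDr (dotvC v u); lra.
Qed.

Lemma dotv_unit_le {m : nat} (u v : 'rV[R]_m) : norm2 u = 1 -> dotv u v <= norm2 v.
Proof.
move=> u1; have uu : dotv u u = 1 by rewrite -norm2_sq u1 expr1n.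
have := norm2_sq v; set r := norm2 v => vv.
have r0 : 0 <= r := norm2_ge0 v.
have := dotv_ge0 (r *: u - v).
rewrite !dotvBl !dotvBr !dotvZl !dotvZr uu (dotvC v u) -vv => h.
case: (eqVneq r 0) => [r00|rn0].
  have v0 : v = 0 by apply: dotv_eq0; rewrite -vv r00 expr0n.
  by rewrite v0 dotv0r r00.
have rp : 0 < r by rewrite lt_neqAle eq_sym rn0.
have : r * dotv u v <= r * r by nra.
by rewrite ler_pM2l.
Qed.

Lemma pinsker_term' (p q : R) : 0 <= p -> 0 < q ->
  3 / 2 * ((p - q) ^+ 2 / (p + 2 * q)) <= (if p == 0 then 0 else p * ln (p / q)) - p + q.
Proof.
move=> p0 q0; case: eqP => [->|/eqP pn0].
  have e : 3 / 2 * ((0 - q) ^+ 2 / (0 + 2 * q)) = 3 / 4 * q.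
    by field; exact: lt0r_neq0.
  rewrite e; lra.
have p0' : 0 < p by rewrite lt_neqAle eq_sym pn0.
have := @pinsker_term R p q p0' q0.
have -> : 3 / 2 * ((p - q) ^+ 2 / (p + 2 * q)) = 3 * (p - q) ^+ 2 / (2 * (p + 2 * q)).
  by field; apply/lt0r_neq0; lra.
by [].
Qed.

Lemma cs_sum n (d w : 'I_n -> R) : (forall i, 0 < w i) ->
  (\sum_i `|d i|) ^+ 2 <= (\sum_i (d i ^+ 2 / w i)) * (\sum_i w i).
Proof.
move=> w0.
set D := \sum_i `|d i|; set X := \sum_i (d i ^+ 2 / w i); set W := \sum_i w i.
have key l : 0 < l -> 2 * D <= l * X + W / l.
  move=> l0; rewrite /D /X /W !mulr_sumr mulr_suml -big_split /=.
  apply: ler_sum => i _; exact: cs_term.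
have D0 : 0 <= D by apply: sumr_ge0 => i _; exact: normr_ge0.
have X0 : 0 <= X by apply: sumr_ge0 => i _; apply: divr_ge0; [exact: sqr_ge0|exact: ltW].
have W0 : 0 <= W by apply: sumr_ge0 => i _; exact: ltW.
case: (eqVneq D 0) => [->|Dn0]; first by rewrite expr0n /= mulr_ge0.
have Dp : 0 < D by rewrite lt_neqAle eq_sym Dn0.
case: (eqVneq X 0) => [X00|Xn0].
  have Wp : 0 < W + 1 by lra.
  have := key ((W + 1) / D) (divr_gt0 Wp Dp).
  rewrite X00 mulr0 add0r invf_div.
  have : W * (D / (W + 1)) < D.
    rewrite mulrA ltr_pdivrMr // ; nra.
  lra.
have Xp : 0 < X by rewrite lt_neqAle eq_sym Xn0.
have := key (D / X) (divr_gt0 Dp Xp).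
rewrite invf_div mulrAC -mulrA divff // mulr1 => h.
have : D <= W * (X / D) by lra.
rewrite mulrA ler_pdivlMr // expr2 [X * W]mulrC.
by [].
Qed.

Lemma pinsker n (p q : 'rV[R]_n) : simplex p -> simplex q ->
  (forall i, 0 < q ord0 i) -> norm1 (p - q) ^+ 2 / 2 <= KL p q.
Proof.
move=> [p0 p1] [q0 q1] qp.
have hw i : 0 < p ord0 i + 2 * q ord0 i by have := p0 i; have := qp i; lra.
have cs := @cs_sum n (fun i => p ord0 i - q ord0 i) _ hw.
have eW : \sum_i (p ord0 i + 2 * q ord0 i) = 3.
  by rewrite big_split /= -mulr_sumr p1 q1; lra.
rewrite eW in cs.
have eK : KL p q = \sum_i ((if p ord0 i == 0 then 0 else p ord0 i * ln (p ord0 i / q ord0 i)) - p ord0 i + q ord0 i).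
  rewrite big_split /= big_split /= sumrN p1 q1 /KL; lra.
have hK : 3 / 2 * (\sum_i ((p ord0 i - q ord0 i) ^+ 2 / (p ord0 i + 2 * q ord0 i))) <= KL p q.
  rewrite eK mulr_sumr; apply: ler_sum => i _; exact: pinsker_term'.
have eN : norm1 (p - q) = \sum_i `|p ord0 i - q ord0 i|.
  by apply: eq_bigr => i _; rewrite !mxE.
rewrite eN; lra.
Qed.

End Vec.
Section Gibbs.
Variable R : realType.

Definition softmax n (a : 'rV[R]_n) : 'rV[R]_n :=
  \row_i (expR (- a ord0 i) / \sum_j expR (- a ord0 j)).

Lemma sm_Z_gt0 n (a : 'rV[R]_n) : (0 < n)%N -> 0 < \sum_j expR (- a ord0 j).
Proof.
case: n a => // n a _; rewrite (bigD1 ord0) //=.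
apply: ltr_pwDl; first exact: expR_gt0.
by apply: sumr_ge0 => j _; exact: ltW (expR_gt0 _).
Qed.

Lemma sm_pos n (a : 'rV[R]_n) i : 0 < softmax a ord0 i.
Proof.
rewrite mxE; apply: divr_gt0; first exact: expR_gt0.
apply: (@sm_Z_gt0 n a); by case: n a i => [|n] a [].
Qed.

Lemma sm_simplex n (a : 'rV[R]_n) : (0 < n)%N -> simplex (softmax a).
Proof.
move=> n0; split; first by move=> i; exact: ltW (sm_pos a i).
rewrite /softmax; under eq_bigr do rewrite mxE.
by rewrite -mulr_suml divff // gt_eqF // sm_Z_gt0.
Qed.

Lemma unifE n i : unif R n ord0 i = n%:R^-1.
Proof. by rewrite mxE. Qed.

Lemma simplex_le1 n (p : 'rV[R]_n) i : simplex p -> p ord0 i <= 1.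
Proof.
move=> [p0 p1]; rewrite -p1 (bigD1 i) //= lerDl.
by apply: sumr_ge0 => j _; exact: p0.
Qed.

Lemma KL_sm n (a : 'rV[R]_n) (p : 'rV[R]_n) : (0 < n)%N -> simplex p ->
  KL p (softmax a) = KL p (unif R n) + dotv p a
     + (ln (\sum_j expR (- a ord0 j)) - ln n%:R).
Proof.
move=> n0 [p0 p1].
have Z0 := sm_Z_gt0 a n0.
have nn : 0 < n%:R :> R by rewrite ltr0n.
have -> : ln (\sum_j expR (- a ord0 j)) - ln n%:R
   = \sum_i p ord0 i * (ln (\sum_j expR (- a ord0 j)) - ln n%:R).
  by rewrite -mulr_suml p1 mul1r.
rewrite /KL /dotv -!big_split /=; apply: eq_bigr => i _.
case: eqP => [->|/eqP pn0]; first by rewrite !mul0r !addr0.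
have pp : 0 < p ord0 i by rewrite lt_neqAle eq_sym pn0 p0.
rewrite !mxE !ln_div ?posrE ?expR_gt0 ?divr_gt0 ?invr_gt0 //.
have -> : ln (expR (- a ord0 i)) = - a ord0 i :> R by exact: expRK.
rewrite lnV ?posrE ?invr_gt0 //; ring.
exact: expR_gt0.
Qed.

Lemma KL_self n (p : 'rV[R]_n) : KL p p = 0.
Proof.
rewrite /KL big1 // => i _; case: eqP => // /eqP h.
by rewrite divff // ln1 mulr0.
Qed.

Lemma KL_unif_le n (p : 'rV[R]_n) : (0 < n)%N -> simplex p -> KL p (unif R n) <= ln n%:R.
Proof.
move=> n0 sp; have [p0 p1] := sp.
have nn : 0 < n%:R :> R by rewrite ltr0n.
apply: (@le_trans _ _ (\sum_i p ord0 i * ln n%:R)); last by rewrite -mulr_suml p1 mul1r.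
rewrite /KL; apply: ler_sum => i _.
case: eqP => [->|/eqP pn0]; first by rewrite mul0r.
have pp : 0 < p ord0 i by rewrite lt_neqAle eq_sym pn0 p0.
rewrite unifE invrK lnM ?posrE // mulrDr.
suff : p ord0 i * ln (p ord0 i) <= 0 by lra.
apply: mulr_ge0_le0; first exact: ltW.
exact: ln_le0 (simplex_le1 i sp).
Qed.

Lemma KL_ge0 n (p q : 'rV[R]_n) : simplex p -> simplex q -> (forall i, 0 < q ord0 i) ->
  0 <= KL p q.
Proof.
move=> sp sq qp; apply: le_trans (pinsker sp sq qp).
by apply: divr_ge0 => //; exact: sqr_ge0.
Qed.

Lemma unif_simplex n : (0 < n)%N -> simplex (unif R n).
Proof.
move=> n0; split=> [i|]; first by rewrite unifE invr_ge0 ler0n.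
under eq_bigr do rewrite unifE.
by rewrite sumr_const card_ord -[_ *+ n]mulr_natr mulVf // pnatr_eq0 -lt0n.
Qed.

Lemma unif_pos n i : 0 < unif R n ord0 i.
Proof. rewrite unifE invr_gt0 ltr0n; by case: n i => [[]|]. Qed.

Lemma norm1_eq0 n (v : 'rV[R]_n) : norm1 v = 0 -> v = 0.
Proof.
move=> /eqP; rewrite /norm1 psumr_eq0 => [/allP h|k _]; last exact: normr_ge0.
apply/rowP => k; rewrite mxE; apply/eqP.
by have := h k (mem_index_enum _); rewrite /= normr_eq0.
Qed.

Lemma ftrl_strong n (Phi : 'rV[R]_n -> R) (a : 'rV[R]_n) (k : R) (pt : 'rV[R]_n) :
  (0 < n)%N ->
  (forall p, simplex p -> Phi p = dotv p a + k + KL p (unif R n)) ->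
  simplex pt -> (forall p, simplex p -> Phi pt <= Phi p) ->
  pt = softmax a /\
  forall p, simplex p -> Phi pt + norm1 (p - pt) ^+ 2 / 2 <= Phi p.
Proof.
move=> n0 hPhi spt hmin.
set s := softmax a.
have ss : simplex s := sm_simplex a n0.
have gibbs p : simplex p -> Phi p = Phi s + KL p s.
  move=> sp; have hs := KL_sm a n0 ss; rewrite KL_self in hs.
  rewrite !hPhi // !KL_sm //; lra.
have hK : KL pt s <= 0.
  have := hmin s ss; rewrite (gibbs pt spt); lra.
have e : pt = s.
  have := pinsker spt ss (sm_pos a).
  move=> h; have : norm1 (pt - s) ^+ 2 <= 0 by lra.
  move=> h2; have : norm1 (pt - s) ^+ 2 == 0.
    by rewrite eq_le h2 sqr_ge0.
  rewrite sqrf_eq0 => /eqP /norm1_eq0 /eqP.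
  by rewrite subr_eq0 => /eqP.
split => // p sp.
rewrite (gibbs p sp) e lerD2l.
exact: pinsker sp ss (sm_pos a).
Qed.


Lemma gibbs_min n (Phi : 'rV[R]_n -> R) (a : 'rV[R]_n) (k : R) :
  (0 < n)%N ->
  (forall p, simplex p -> Phi p = dotv p a + k + KL p (unif R n)) ->
  forall p, simplex p -> Phi (softmax a) <= Phi p.
Proof.
move=> n0 hPhi p sp.
set s := softmax a.
have ss : simplex s := sm_simplex a n0.
have hs := KL_sm a n0 ss; rewrite KL_self in hs.
have := KL_ge0 sp ss (sm_pos a).
rewrite !hPhi // !KL_sm //; lra.
Qed.

End Gibbs.
Section Game1.
Variable R : realType.

Lemma dm_mul n d (x : 'I_n -> 'rV[R]_d) (y : 'I_n -> R) (p : 'rV[R]_n) :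
  p *m data_matrix x y = \sum_i p ord0 i *: (y i *: x i).
Proof.
apply/rowP => k; rewrite !mxE summxE; apply: eq_bigr => i _.
by rewrite !mxE.
Qed.

Lemma dotv_dm n d (x : 'I_n -> 'rV[R]_d) (y : 'I_n -> R) (p : 'rV[R]_n) w :
  dotv (p *m data_matrix x y) w = \sum_i p ord0 i * (y i * dotv (x i) w).
Proof.
rewrite dm_mul dotv_suml; apply: eq_bigr => i _; by rewrite !dotvZl.
Qed.

Lemma dotv_mulmx n d (M : 'M[R]_(n, d)) (p : 'rV[R]_n) (w : 'rV[R]_d) :
  dotv (p *m M) w = dotv p (w *m M^T).
Proof.
rewrite /dotv; under eq_bigr do rewrite mxE mulr_suml.
rewrite exchange_big /=; apply: eq_bigr => i _.
rewrite mxE mulr_sumr; apply: eq_bigr => k _; rewrite mxE; ring.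
Qed.

Lemma gpayE n d (A : 'M[R]_(n, d)) w p :
  gpay A w p = dotv (p *m A) w - 2^-1 * dotv w w.
Proof. by rewrite /gpay norm2_sq. Qed.

Definition Sr (k : nat) : R := k%:R * k.+1%:R / 2.

Lemma Sr0 : Sr 0 = 0.
Proof. by rewrite /Sr mul0r mul0r. Qed.

Lemma SrS k : Sr k.+1 = Sr k + k.+1%:R.
Proof. rewrite /Sr -addn1 !natrD; by field. Qed.

Lemma Sr_gt0 k : (0 < k)%N -> 0 < Sr k.
Proof.
move=> k0; rewrite /Sr; apply: divr_gt0 => //; apply: mulr_gt0; by rewrite ltr0n.
Qed.
Lemma Sr_ge0 k : 0 <= Sr k.
Proof. by case: k => [|k]; [rewrite Sr0|exact/ltW/Sr_gt0]. Qed.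

Lemma sumnat k : \sum_(1 <= j < k.+1) (j%:R : R) = Sr k.
Proof.
elim: k => [|k IH]; first by rewrite big_geq // Sr0.
by rewrite big_nat_recr //= IH SrS.
Qed.

Lemma quad_sum d (I : Type) (r : seq I) (P : pred I) (c : I -> R) (F : I -> 'rV[R]_d) w :
  \sum_(i <- r | P i) c i * (- (dotv (F i) w - 2^-1 * dotv w w))
  = 2^-1 * (\sum_(i <- r | P i) c i) * dotv w w - dotv (\sum_(i <- r | P i) c i *: F i) w.
Proof.
rewrite dotv_suml -mulrA mulr_suml mulr_sumr -sumrB; apply: eq_bigr => i _.
rewrite dotvZl; ring.
Qed.

Lemma argmin_quad d (s : R) (M w : 'rV[R]_d) : 0 < s ->
  (forall w', 2^-1 * s * dotv w w - dotv M w <= 2^-1 * s * dotv w' w' - dotv M w') ->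
  w = s^-1 *: M.
Proof.
move=> s0 h; have := h (s^-1 *: M).
have e : 2^-1 * s * dotv w w - dotv M w
   - (2^-1 * s * dotv (s^-1 *: M) (s^-1 *: M) - dotv M (s^-1 *: M))
   = 2^-1 * s * dotv (w - s^-1 *: M) (w - s^-1 *: M).
  rewrite !dotvBl !dotvBr !dotvZl !dotvZr (dotvC w M); field; exact: lt0r_neq0.
move=> h2.
have : 2^-1 * s * dotv (w - s^-1 *: M) (w - s^-1 *: M) <= 0 by rewrite -e; lra.
have hs : 0 < 2^-1 * s by apply: mulr_gt0.
rewrite pmulr_rle0 // => h3.
have : dotv (w - s^-1 *: M) (w - s^-1 *: M) = 0.
  by apply/eqP; rewrite eq_le h3 dotv_ge0.
by move/dotv_eq0/eqP; rewrite subr_eq0 => /eqP.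
Qed.

Lemma quad_lb d (s : R) (M w : 'rV[R]_d) : 0 < s ->
  - (dotv M M / (2 * s)) <= 2^-1 * s * dotv w w - dotv M w.
Proof.
move=> s0.
have e : 2^-1 * s * dotv w w - dotv M w + dotv M M / (2 * s)
   = 2^-1 * s * dotv (w - s^-1 *: M) (w - s^-1 *: M).
  rewrite !dotvBl !dotvBr !dotvZl !dotvZr (dotvC w M); field; exact: lt0r_neq0.
have : 0 <= 2^-1 * s * dotv (w - s^-1 *: M) (w - s^-1 *: M).
  apply: mulr_ge0; [apply: mulr_ge0; [lra|exact: ltW]|exact: dotv_ge0].
rewrite -e; lra.
Qed.


Lemma step_alg d (a b c : 'rV[R]_d) (s t : R) : 0 < s -> 0 < t ->
  let w := (s + t)^-1 *: (a + t *: b) in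
  t * (- (dotv c w - 2^-1 * dotv w w)) + dotv (a + t *: c) (a + t *: c) / (2 * (s + t))
    - dotv a a / (2 * s)
  = t ^+ 2 / (2 * (s + t)) * dotv (b - c) (b - c)
    - s / 2 * dotv (w - s^-1 *: a) (w - s^-1 *: a).
Proof.
move=> s0 t0 w; rewrite /w.
rewrite !dotvBl !dotvBr !dotvDl !dotvDr !dotvZl !dotvZr !dotvDl !dotvDr !dotvZl !dotvZr.
rewrite ?(dotvC b a) ?(dotvC c a) ?(dotvC c b).
field; apply/andP; split; apply: lt0r_neq0 => //; lra.
Qed.

Lemma step_alg0 d (b c : 'rV[R]_d) (t : R) : 0 < t ->
  let w := (0 + t)^-1 *: (0 + t *: b) in
  t * (- (dotv c w - 2^-1 * dotv w w)) + dotv (0 + t *: c) (0 + t *: c) / (2 * (0 + t))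
    - dotv (0 : 'rV[R]_d) 0 / (2 * 0)
  = t ^+ 2 / (2 * (0 + t)) * dotv (b - c) (b - c).
Proof.
move=> t0 w; rewrite /w !add0r dotv0l mul0r subr0.
rewrite !dotvBl !dotvBr !dotvZl !dotvZr ?dotvZl ?dotvZr ?(dotvC c b).
field; apply: lt0r_neq0 => //; lra.
Qed.

End Game1.
Section Game2.
Variable R : realType.
Variables (n d : nat) (x : 'I_n -> 'rV[R]_d) (y : 'I_n -> R) (wstar : 'rV[R]_d)
  (gamma : R).
Hypothesis Hd : data_ok x y wstar gamma.

Local Notation A := (data_matrix x y).

Lemma y_sq i : y i * y i = 1.
Proof. by have [_ hy _ _ _] := Hd; case: (hy i) => ->; rewrite ?mulr1 ?mulrNN ?mulr1. Qed.

Lemma zz_le1 i : dotv (y i *: x i) (y i *: x i) <= 1.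
Proof.
have [hx _ _ _ _] := Hd.
rewrite dotvZl dotvZr mulrA y_sq mul1r -norm2_sq.
have := hx i; have := norm2_ge0 (x i); nra.
Qed.

Lemma zdot_le1 i j : `|dotv (y i *: x i) (y j *: x j)| <= 1.
Proof.
have h1 := dotv_2le (y i *: x i) (y j *: x j).
have h2 := dotv_2leN (y i *: x i) (y j *: x j).
have := zz_le1 i; have := zz_le1 j.
rewrite ler_norml; move=> a b; apply/andP; split; lra.
Qed.

Lemma normA_le (del : 'rV[R]_n) : dotv (del *m A) (del *m A) <= norm1 del ^+ 2.
Proof.
rewrite {1}dm_mul dotv_suml /norm1 expr2 mulr_suml.
apply: ler_sum => i _.
rewrite dotvZl dm_mul dotv_sumr mulr_sumr mulr_sumr.
apply: ler_sum => j _.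
rewrite dotvZr.
apply: le_trans (ler_norm _) _.
rewrite !normrM mulrA; apply: ler_piMr; first by apply: mulr_ge0; exact: normr_ge0.
exact: zdot_le1.
Qed.

Lemma margin_star i : gamma <= y i * dotv (x i) wstar.
Proof.
have [_ _ _ hm _] := Hd.
rewrite -hm /minmargin; apply: ge_inf; last by exists i.
exists (- \sum_j `|y j * dotv (x j) wstar|) => _ [j _ <-].
rewrite lerNl; apply: le_trans (ler_norm _) _.
by rewrite normrN (bigD1 j) //= lerDl sumr_ge0 // => k _; exact: normr_ge0.
Qed.

Lemma simplex_star (q : 'rV[R]_n) : simplex q -> gamma <= dotv (q *m A) wstar.
Proof.
move=> [q0 q1]; rewrite dotv_dm.
apply: (@le_trans _ _ (\sum_i q ord0 i * gamma)).
  by rewrite -mulr_suml q1 mul1r.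
apply: ler_sum => i _; apply: ler_wpM2l => //; exact: margin_star.
Qed.

End Game2.
Section Game3.
Variable R : realType.
Variables (n d : nat) (x : 'I_n -> 'rV[R]_d) (y : 'I_n -> R) (wstar : 'rV[R]_d)
  (gamma : R) (T : nat) (w : nat -> 'rV[R]_d) (p : nat -> 'rV[R]_n).
Hypotheses (Hn : (0 < n)%N) (Hd : data_ok x y wstar gamma)
  (Hg : game_dynamics (data_matrix x y) T w p).

Local Notation A := (data_matrix x y).
Definition uu j := p j *m A.
Definition UU k := \sum_(1 <= j < k.+1) j%:R *: uu j.

Lemma UUS k : UU k.+1 = UU k + k.+1%:R *: uu k.+1.
Proof. by rewrite /UU big_nat_recr. Qed.
Lemma UU0 : UU 0 = 0.
Proof. by rewrite /UU big_geq. Qed.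

Lemma p_simplex j : (j <= T)%N -> simplex (p j).
Proof.
case: j => [_|j jT]; first by case: Hg => -> _; exact: unif_simplex.
by case: Hg => _ /(_ j.+1); rewrite jT => /(_ isT) [].
Qed.

Lemma obj_wE t w' : obj_w A p t.+1 w' =
  2^-1 * Sr R t.+1 * dotv w' w' - dotv (UU t + t.+1%:R *: uu t) w'.
Proof.
rewrite /obj_w /=; under eq_bigr do rewrite gpayE.
rewrite quad_sum sumnat gpayE SrS dotvDl dotvZl -/(UU t); rewrite /uu; ring.
Qed.

Lemma w_form t : (t < T)%N -> w t.+1 = (Sr R t.+1)^-1 *: (UU t + t.+1%:R *: uu t).
Proof.
move=> tT; case: Hg => _ /(_ t.+1); rewrite tT => /(_ isT) [hw _ _].
apply: argmin_quad; first exact: Sr_gt0.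
by move=> w'; rewrite -!obj_wE.
Qed.


Definition QQ k := dotv (UU k) (UU k) / (2 * Sr R k).

Lemma norm1N m (v : 'rV[R]_m) : norm1 (- v) = norm1 v.
Proof. by apply: eq_bigr => i _; rewrite mxE normrN. Qed.

Lemma regw_step k : (k < T)%N ->
  k.+1%:R * (- gpay A (w k.+1) (p k.+1)) + QQ k.+1 - QQ k <= norm1 (p k.+1 - p k) ^+ 2.
Proof.
move=> kT; rewrite w_form // gpayE /QQ UUS SrS -/(uu k.+1).
have t0 : 0 < k.+1%:R :> R by rewrite ltr0n.
have hb : dotv (uu k - uu k.+1) (uu k - uu k.+1) <= norm1 (p k.+1 - p k) ^+ 2.
  by rewrite /uu -mulmxBl -opprB -(norm1N (p k.+1 - p k)) (normA_le Hd).
have hc : k.+1%:R ^+ 2 / (2 * (Sr R k + k.+1%:R)) <= 1 :> R.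
  rewrite -SrS /Sr ler_pdivrMr; last by apply: mulr_gt0 => //; apply: divr_gt0; rewrite ?mulr_gt0 ?ltr0n.
  rewrite mul1r expr2 mulrA mulrAC divff // mul1r -!natrM ler_nat leq_mul2l ltnW //.
have hbc : 0 <= dotv (uu k - uu k.+1) (uu k - uu k.+1) := dotv_ge0 _.
case: k kT t0 hb hc hbc => [|k] kT t0 hb hc hbc.
  rewrite UU0 Sr0 step_alg0 //.
  rewrite Sr0 in hc; nra.
rewrite step_alg //; last exact: Sr_gt0.
have : 0 <= Sr R k.+1 / 2 * dotv ((Sr R k.+1 + k.+2%:R)^-1 *: (UU k.+1 + k.+2%:R *: uu k.+1) -
    (Sr R k.+1)^-1 *: UU k.+1) ((Sr R k.+1 + k.+2%:R)^-1 *: (UU k.+1 + k.+2%:R *: uu k.+1) -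
    (Sr R k.+1)^-1 *: UU k.+1).
  apply: mulr_ge0; last exact: dotv_ge0.
  by apply: divr_ge0 => //; exact: Sr_ge0.
nra.
Qed.


Lemma QQ0 : QQ 0 = 0.
Proof. by rewrite /QQ UU0 dotv0l mul0r. Qed.

Lemma regw_sum k : (k <= T)%N ->
  \sum_(1 <= t < k.+1) t%:R * (- gpay A (w t) (p t)) + QQ k
  <= \sum_(1 <= t < k.+1) norm1 (p t - p t.-1) ^+ 2.
Proof.
elim: k => [_|k IH kT]; first by rewrite !big_geq // QQ0 addr0.
rewrite !(big_nat_recr k.+1 1) //=.
have := IH (ltnW kT); have := regw_step kT; lra.
Qed.

Lemma Fw_eq w' : \sum_(1 <= t < T.+1) t%:R * (- gpay A w' (p t))
  = 2^-1 * Sr R T * dotv w' w' - dotv (UU T) w'.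
Proof. by under eq_bigr do rewrite gpayE; rewrite quad_sum sumnat. Qed.

Lemma Fw_lb : (0 < T)%N -> forall w',
  - QQ T <= \sum_(1 <= t < T.+1) t%:R * (- gpay A w' (p t)).
Proof. by move=> T0 w'; rewrite Fw_eq /QQ; apply: quad_lb; exact: Sr_gt0. Qed.

Lemma infw_lb : (0 < T)%N ->
  - QQ T <= inf (range (fun w' : 'rV[R]_d => \sum_(1 <= t < T.+1) t%:R * (- gpay A w' (p t)))).
Proof.
move=> T0; apply: lb_le_inf; first by eexists; exists 0.
by move=> _ [w' _ <-]; exact: Fw_lb.
Qed.

Lemma PL_ge0 : 0 <= path_len T p.
Proof. by apply: sumr_ge0 => t _; exact: sqr_ge0. Qed.

Lemma regret_w_le : (0 < T)%N -> regret_w A T w p <= path_len T p.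
Proof.
move=> T0; rewrite /regret_w.
have := regw_sum (leqnn T); have := infw_lb T0; rewrite /path_len; lra.
Qed.

Lemma obj_pE k q : obj_p A w k q =
  dotv q (4^-1 *: \sum_(1 <= s < k.+1) s%:R *: (w s *m A^T))
  + (- (4^-1 * \sum_(1 <= s < k.+1) s%:R * (2^-1 * dotv (w s) (w s))))
  + KL q (unif R n).
Proof.
rewrite /obj_p; congr (_ + _).
rewrite dotvZr dotv_sumr -mulrN -mulrDr; congr (_ * _).
rewrite -sumrN -big_split; apply: eq_bigr => s _.
rewrite gpayE dotv_mulmx dotvZr /=; ring.
Qed.

Lemma obj_p0 q : obj_p A w 0 q = KL q (unif R n).
Proof. by rewrite /obj_p big_geq // mulr0 add0r. Qed.

Lemma obj_pS k q : obj_p A w k.+1 q = obj_p A w k q + 4^-1 * (k.+1%:R * gpay A (w k.+1) q).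
Proof. rewrite /obj_p (big_nat_recr k.+1 1) //= mulrDr; ring. Qed.

Lemma strong k : (k <= T)%N -> forall q, simplex q ->
  obj_p A w k (p k) + norm1 (q - p k) ^+ 2 / 2 <= obj_p A w k q.
Proof.
move=> kT.
have hmin : forall q, simplex q -> obj_p A w k (p k) <= obj_p A w k q.
  case: k kT => [_|k kT] q sq.
    case: Hg => -> _; rewrite !obj_p0 KL_self.
    by apply: KL_ge0 => //; [exact: unif_simplex|exact: unif_pos].
  by case: Hg => _ /(_ k.+1); rewrite kT => /(_ isT) [_ _ /(_ q sq)].
have [_ h] := ftrl_strong Hn (fun q _ => obj_pE k q) (p_simplex kT) hmin.
exact: h.
Qed.

Lemma ftrl_sum k : (k <= T)%N ->
  4^-1 * \sum_(1 <= s < k.+1) s%:R * gpay A (w s) (p s)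
  + 2^-1 * \sum_(1 <= s < k.+1) norm1 (p s - p s.-1) ^+ 2 <= obj_p A w k (p k).
Proof.
elim: k => [_|k IH kT].
  rewrite !big_geq // obj_p0; case: Hg => -> _; rewrite KL_self; lra.
rewrite !(big_nat_recr k.+1 1) //= obj_pS.
have := IH (ltnW kT).
have := strong (ltnW kT) (p_simplex kT); lra.
Qed.

Lemma Lp_lb q : simplex q ->
  \sum_(1 <= t < T.+1) t%:R * gpay A (w t) (p t) + 2 * path_len T p - 4 * ln n%:R
  <= \sum_(1 <= t < T.+1) t%:R * gpay A (w t) q.
Proof.
move=> sq.
have h1 := ftrl_sum (leqnn T).
have h2 := strong (leqnn T) sq.
have h3 := KL_unif_le Hn sq.
have h4 : 0 <= norm1 (q - p T) ^+ 2 / 2 by apply: divr_ge0 => //; exact: sqr_ge0.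
have e : obj_p A w T q = 4^-1 * \sum_(1 <= t < T.+1) t%:R * gpay A (w t) q + KL q (unif R n).
  by [].
rewrite e in h2; rewrite /path_len; lra.
Qed.

Lemma infp_lb :
  \sum_(1 <= t < T.+1) t%:R * gpay A (w t) (p t) + 2 * path_len T p - 4 * ln n%:R
  <= inf [set \sum_(1 <= t < T.+1) t%:R * gpay A (w t) p' | p' in @simplex R n].
Proof.
apply: lb_le_inf; first by eexists; exists (unif R n) => //; exact: unif_simplex.
by move=> _ [q sq <-]; exact: Lp_lb.
Qed.

Lemma regret_p_le : regret_p A T w p <= 4 * ln n%:R - 2 * path_len T p.
Proof. rewrite /regret_p; have := infp_lb; lra. Qed.


Lemma uu_star j : (j <= T)%N -> gamma <= dotv (uu j) wstar.
Proof. by move=> jT; apply: (simplex_star Hd); exact: p_simplex. Qed.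

Lemma UU_star k : (k <= T)%N -> gamma * Sr R k <= dotv (UU k) wstar.
Proof.
move=> kT; rewrite /UU dotv_suml -sumnat mulr_sumr.
apply: ler_sum_nat => j /andP[j1 j2]; rewrite dotvZl mulrC.
apply: ler_wpM2l; first exact: ler0n.
by apply: uu_star; apply: leq_trans kT; rewrite -ltnS.
Qed.

Lemma w_star t : (1 <= t <= T)%N -> gamma <= dotv (w t) wstar.
Proof.
case: t => // k /andP[_ kT]; rewrite w_form // dotvZl dotvDl dotvZl.
have h1 := UU_star (ltnW kT).
have h2 := uu_star (ltnW kT).
have S0 : 0 < Sr R k.+1 by exact: Sr_gt0.
rewrite ler_pdivlMl // SrS.
have t0 : 0 <= k.+1%:R :> R by exact: ler0n.
nra.
Qed.

Lemma wbarE : wbar T w = (Sr R T)^-1 *: \sum_(1 <= t < T.+1) t%:R *: w t.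
Proof. by rewrite /wbar sumnat. Qed.

Lemma wbar_star : (0 < T)%N -> gamma <= dotv (wbar T w) wstar.
Proof.
move=> T0; rewrite wbarE dotvZl dotv_suml.
have S0 := Sr_gt0 R T0.
rewrite ler_pdivlMl // -sumnat mulr_suml.
apply: ler_sum_nat => t /andP[t1 t2]; rewrite dotvZl.
by apply: ler_wpM2l; [exact: ler0n|apply: w_star; rewrite t1 -ltnS].
Qed.

Lemma wbar_norm : (0 < T)%N -> gamma <= norm2 (wbar T w).
Proof.
move=> T0; apply: le_trans (wbar_star T0) _; rewrite dotvC.
by apply: dotv_unit_le; case: Hd.
Qed.

Lemma wstar_sq : dotv wstar wstar = 1.
Proof. by case: Hd => _ _ h _ _; rewrite -norm2_sq h expr1n. Qed.

Lemma infw_ub : (0 < T)%N ->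
  inf (range (fun w' : 'rV[R]_d => \sum_(1 <= t < T.+1) t%:R * (- gpay A w' (p t))))
  <= - (Sr R T * (gamma ^+ 2 / 2)).
Proof.
move=> T0; apply: le_trans.
  apply: ge_inf; last by exists (gamma *: wstar).
  by exists (- QQ T) => _ [w' _ <-]; exact: Fw_lb.
rewrite -sumnat mulr_suml -sumrN.
apply: ler_sum_nat => t /andP[t1 t2].
rewrite gpayE dotvZr dotvZl dotvZr wstar_sq.
have g0 : 0 < gamma by case: Hd.
have := uu_star (t2 : (t <= T)%N); rewrite /uu => h.
have t0 : 0 <= t%:R :> R by exact: ler0n.
have : gamma * gamma <= gamma * dotv (p t *m A) wstar by apply: ler_wpM2l => //; exact: ltW.
nra.
Qed.

Definition ev i : 'rV[R]_n := \row_j (j == i)%:R.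

Lemma ev_simplex i : simplex (ev i).
Proof.
split=> [j|]; first by rewrite mxE ler0n.
rewrite (bigD1 i) //= big1 => [|j /negbTE ji]; last by rewrite mxE ji.
by rewrite mxE eqxx addr0.
Qed.

Lemma gpay_ev i v : gpay A v (ev i) = y i * dotv (x i) v - 2^-1 * dotv v v.
Proof.
rewrite gpayE dotv_dm (bigD1 i) //= big1 => [|j /negbTE ji]; last by rewrite mxE ji mul0r.
by rewrite mxE eqxx mul1r addr0.
Qed.

Lemma infp_ub i :
  inf [set \sum_(1 <= t < T.+1) t%:R * gpay A (w t) p' | p' in @simplex R n]
  <= \sum_(1 <= t < T.+1) t%:R * gpay A (w t) (ev i).
Proof.
apply: ge_inf; last by exists (ev i) => //; exact: ev_simplex.
by eexists => _ [q sq <-]; exact: Lp_lb.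
Qed.

Lemma core i : (0 < T)%N ->
  gamma ^+ 2 / 2 + 2^-1 * dotv (wbar T w) (wbar T w) - 4 * ln n%:R / Sr R T
  <= y i * dotv (x i) (wbar T w).
Proof.
move=> T0.
have S0 := Sr_gt0 R T0.
have hw := regret_w_le T0.
have hp := regret_p_le.
have hPL := PL_ge0.
have hiw := infw_ub T0.
have hip := infp_ub i.
have eS : \sum_(1 <= t < T.+1) t%:R * (- gpay A (w t) (p t))
   = - \sum_(1 <= t < T.+1) t%:R * gpay A (w t) (p t).
  by rewrite -sumrN; apply: eq_bigr => t _; rewrite mulrN.
rewrite /regret_w /regret_p eS in hw hp.
have hsum : - inf (range (fun w' : 'rV[R]_d => \sum_(1 <= t < T.+1) t%:R * (- gpay A w' (p t))))
   - inf [set \sum_(1 <= t < T.+1) t%:R * gpay A (w t) p' | p' in @simplex R n] <= 4 * ln n%:R.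
  lra.
set wb := wbar T w.
have eL : \sum_(1 <= t < T.+1) t%:R * gpay A (w t) (ev i)
   = Sr R T * (y i * dotv (x i) wb) - 2^-1 * \sum_(1 <= t < T.+1) t%:R * dotv (w t) (w t).
  rewrite /wb wbarE dotvZr dotv_sumr.
  set X := (\sum_(1 <= i0 < T.+1) dotv (x i) (i0%:R *: w i0)).
  have -> : Sr R T * (y i * ((Sr R T)^-1 * X)) = y i * X by field; exact: lt0r_neq0.
  rewrite /X.
  rewrite mulr_sumr mulr_sumr -sumrB; apply: eq_bigr => t _.
  by rewrite gpay_ev dotvZr; ring.
have hJ : Sr R T * dotv wb wb <= \sum_(1 <= t < T.+1) t%:R * dotv (w t) (w t).
  have eW : Sr R T *: wb = \sum_(1 <= t < T.+1) t%:R *: w t.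
    by rewrite /wb wbarE scalerA divff ?gt_eqF // scale1r.
  have h1 : Sr R T * dotv wb wb = \sum_(1 <= t < T.+1) t%:R * dotv (w t) wb.
    by rewrite -dotvZl eW dotv_suml; apply: eq_bigr => t _; rewrite dotvZl.
  have h2 : \sum_(1 <= t < T.+1) t%:R * dotv (w t) wb <=
      \sum_(1 <= t < T.+1) t%:R * (2^-1 * (dotv (w t) (w t) + dotv wb wb)).
    apply: ler_sum => t _; apply: ler_wpM2l; first exact: ler0n.
    have := dotv_2le (w t) wb; lra.
  have h3 : \sum_(1 <= t < T.+1) t%:R * (2^-1 * (dotv (w t) (w t) + dotv wb wb))
     = 2^-1 * \sum_(1 <= t < T.+1) t%:R * dotv (w t) (w t) + 2^-1 * (Sr R T * dotv wb wb).
    rewrite -sumnat mulr_suml !mulr_sumr -big_split; apply: eq_bigr => t _ /=; ring.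
  lra.
rewrite eL in hip.
have key : Sr R T * (gamma ^+ 2 / 2 + 2^-1 * dotv wb wb - 4 * ln n%:R / Sr R T)
    <= Sr R T * (y i * dotv (x i) wb).
  have -> : Sr R T * (gamma ^+ 2 / 2 + 2^-1 * dotv wb wb - 4 * ln n%:R / Sr R T)
     = Sr R T * (gamma ^+ 2 / 2) + 2^-1 * (Sr R T * dotv wb wb) - 4 * ln n%:R.
    by field; exact: lt0r_neq0.
  lra.
by rewrite ler_pM2l in key.
Qed.

End Game3.
Section Accel.
Variable R : realType.
Variables (n d : nat) (x : 'I_n -> 'rV[R]_d) (y : 'I_n -> R) (T : nat)
  (v : nat -> 'rV[R]_d) (q : nat -> 'rV[R]_n) (g : nat -> 'rV[R]_d).
Hypotheses (Hn : (0 < n)%N) (Ha : accel_perceptron x y T v q g).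

Local Notation A := (data_matrix x y).
Definition wq t := (Sr R t)^-1 *: (UU x y q t.-1 + t%:R *: uu x y q t.-1).

Lemma vg_form k : (k <= T)%N ->
  v k = 4^-1 *: \sum_(1 <= s < k.+1) s%:R *: wq s /\
  g k = - ((k.+1%:R)^-1 *: UU x y q k).
Proof.
elim: k => [_|k IH kT].
  case: Ha => _ -> -> _; rewrite big_geq // UU0 !scaler0 ?oppr0; split => //.
have [IHv IHg] := IH (ltnW kT).
case: Ha => _ _ _ /(_ k.+1); rewrite kT => /(_ isT) [hv _ hg].
rewrite (big_nat_recr k.+1 1) //= scalerDr -IHv.
rewrite hv hg /= IHg UUS /wq /=.
rewrite /uu.
have k1 : k.+1%:R != 0 :> R by rewrite pnatr_eq0.
have k2 : k.+2%:R != 0 :> R by rewrite pnatr_eq0.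
split; apply/rowP => j; rewrite !mxE /Sr; field; rewrite ?k1 ?k2 //.
all: have kk : 0 <= k%:R :> R by exact: ler0n.
all: by apply/andP; split; apply: lt0r_neq0; lra.
Qed.

Lemma AT_row (u : 'rV[R]_d) : u *m A^T = \row_i (y i * dotv u (x i)).
Proof.
apply/rowP => i; rewrite !mxE /dotv mulr_sumr; apply: eq_bigr => k _.
by rewrite !mxE; ring.
Qed.

Lemma qexp_sm (u : 'rV[R]_d) : qexp x y u = softmax (u *m A^T).
Proof.
rewrite AT_row; apply/rowP => i; rewrite !mxE mulNr.
by congr (_ / _); apply: eq_bigr => j _; rewrite mxE mulNr.
Qed.

Lemma accel_game : game_dynamics A T wq q.
Proof.
split; first by case: Ha.
move=> t /andP[t1 tT]; case: t t1 tT => // k _ kT.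
have [hv _] := vg_form kT.
case: Ha => _ _ _ /(_ k.+1); rewrite kT => /(_ isT) [_ hq _].
have qs : q k.+1 = softmax (4^-1 *: \sum_(1 <= s < k.+2) s%:R *: (wq s *m A^T)).
  rewrite hq qexp_sm hv; congr softmax.
  by rewrite -scalemxAl mulmx_suml; congr (_ *: _); apply: eq_bigr => s _; rewrite scalemxAl.
split.
- move=> w'; rewrite !obj_wE.
  have S0 : 0 < Sr R k.+1 by exact: Sr_gt0.
  apply: le_trans (quad_lb _ w' S0).
  rewrite /wq /= !dotvZl !dotvZr.
  rewrite le_eqVlt; apply/orP; left; apply/eqP; field; exact: lt0r_neq0.
- by rewrite qs; exact: sm_simplex.
- rewrite qs; apply: gibbs_min => // p' _; exact: obj_pE.
Qed.

End Accel.

Lemma ln_n_ge0 (R : realType) (n : nat) : (0 < n)%N -> 0 <= ln (n%:R : R).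
Proof. by move=> n0; apply: ln_ge0; rewrite ler1n. Qed.

Lemma norm2Z (R : realType) d (c : R) (u : 'rV[R]_d) : 0 <= c -> norm2 (c *: u) = c * norm2 u.
Proof.
move=> c0; rewrite /norm2 dotvZl dotvZr mulrA sqrtrM; last by apply: mulr_ge0.
by rewrite -expr2 sqrtr_sqr ger0_norm.
Qed.

Unset Implicit Arguments.
Theorem theorem4 (R : realType) :
  (* regret bounds *)
  (forall (n d : nat) (x : 'I_n -> 'rV[R]_d) (y : 'I_n -> R) (wstar : 'rV[R]_d)
          (gamma : R) (T : nat) (w : nat -> 'rV[R]_d) (p : nat -> 'rV[R]_n),
     (0 < n)%N -> data_ok x y wstar gamma -> (0 < T)%N ->
     game_dynamics (data_matrix x y) T w p ->
     regret_w (data_matrix x y) T w p <= 2 * path_len T p /\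
     regret_p (data_matrix x y) T w p <= 4 * ln (n%:R : R) - 2 * path_len T p) /\
  (* non-negative margin of the averaged iterate after O(sqrt(log n)/gamma) rounds *)
  (exists C : R, 0 < C /\
    forall (n d : nat) (x : 'I_n -> 'rV[R]_d) (y : 'I_n -> R) (wstar : 'rV[R]_d)
           (gamma : R) (T : nat) (w : nat -> 'rV[R]_d) (p : nat -> 'rV[R]_n),
      (0 < n)%N -> data_ok x y wstar gamma -> (0 < T)%N ->
      game_dynamics (data_matrix x y) T w p ->
      C * Num.sqrt (ln (n%:R : R)) / gamma <= T%:R ->
      forall i : 'I_n, 0 <= y i * dotv (x i) (wbar T w)) /\
  (* normalized margin of the Accelerated Perceptron *)
  (exists c : R, 0 < c /\
    forall (n d : nat) (x : 'I_n -> 'rV[R]_d) (y : 'I_n -> R) (wstar : 'rV[R]_d)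
           (gamma : R) (T : nat) (v : nat -> 'rV[R]_d) (q : nat -> 'rV[R]_n)
           (g : nat -> 'rV[R]_d),
      (0 < n)%N -> data_ok x y wstar gamma -> (0 < T)%N ->
      accel_perceptron x y T v q g ->
      c * (gamma - 8 * ln (n%:R : R) / (gamma * T%:R * T.+1%:R)) <= nmargin x y (v T)).
Proof.
split.
  move=> n d x y wstar gamma T w p Hn Hd HT Hg; split.
    have := regret_w_le Hd Hg HT; have := PL_ge0 T p; lra.
  exact: regret_p_le Hn Hg.
split.
  exists 4; split => // n d x y wstar gamma T w p Hn Hd HT Hg hC i.
  have := core Hn Hd Hg i HT.
  have g0 : 0 < gamma by case: Hd.
  have L0 := ln_n_ge0 R Hn.
  have hww := dotv_ge0 (wbar T w).
  set L := ln (n%:R : R) in hC L0 *.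
  have S0 := Sr_gt0 R HT.
  have hs : Num.sqrt L ^+ 2 = L by rewrite sqr_sqrtr.
  have sq0 : 0 <= Num.sqrt L := sqrtr_ge0 L.
  have h1 : 4 * Num.sqrt L <= gamma * T%:R.
    by rewrite -ler_pdivrMl // mulrC.
  have h2 : 16 * L <= gamma ^+ 2 * T%:R ^+ 2.
    rewrite -hs; have := h1; nra.
  have h3 : 4 * L / Sr R T <= gamma ^+ 2 / 2.
    rewrite ler_pdivrMr // /Sr.
    have T0 : 0 <= T%:R :> R by exact: ler0n.
    have -> : T.+1%:R = T%:R + 1 :> R by rewrite -addn1 natrD.
    nra.
  nra.
exists 1; split => // n d x y wstar gamma T v q g Hn Hd HT Ha.
have Hg := accel_game Hn Ha.
have [hv _] := vg_form Ha (leqnn T).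
set wb := wbar T (wq x y q).
have hcore := core Hn Hd Hg _ HT.
have hr := wbar_norm Hn Hd Hg HT.
have g0 : 0 < gamma by case: Hd.
have S0 := Sr_gt0 R HT.
set c := 4^-1 * Sr R T.
have c0 : 0 < c by apply: mulr_gt0.
have hvT : v T = c *: wb.
  by rewrite hv /wb wbarE scalerA /c -mulrA divff ?gt_eqF // mulr1.
set r := norm2 wb.
have hrr : dotv wb wb = r ^+ 2 by rewrite norm2_sq.
set eps := 4 * ln (n%:R : R) / Sr R T.
have eps0 : 0 <= eps.
  by apply: divr_ge0; [apply: mulr_ge0 => //; exact: ln_n_ge0|exact: ltW].
set M := gamma ^+ 2 / 2 + 2^-1 * dotv wb wb - eps.
have hmin : c * M <= minmargin x y (v T).
  apply: lb_le_inf; first by exists (y (Ordinal Hn) * dotv (x (Ordinal Hn)) (v T)); exists (Ordinal Hn).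
  move=> _ [i _ <-]; rewrite hvT dotvZr mulrCA; apply: ler_wpM2l; first exact: ltW.
  exact: hcore.
have r0 : 0 < r by apply: lt_le_trans hr.
rewrite /nmargin hvT norm2Z; last exact: ltW.
rewrite -/r -hvT.
have e8 : 8 * ln (n%:R : R) / (gamma * T%:R * T.+1%:R) = eps / gamma.
  rewrite /eps /Sr; field.
  have T0 : 0 < T%:R :> R by rewrite ltr0n.
  rewrite !gt_eqF //; by rewrite ltr0n.
rewrite e8 mul1r ler_pdivlMr; last by apply: mulr_gt0.
apply: le_trans (_ : c * M <= _) => //.
rewrite [_ * (c * r)]mulrC -mulrA ler_pM2l //.
rewrite /M hrr.
have key : gamma * (gamma ^+ 2 / 2 + 2^-1 * r ^+ 2 - eps) - gamma * (r * (gamma - eps / gamma))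
   = gamma / 2 * (gamma - r) ^+ 2 + eps * (r - gamma).
  by field; exact: lt0r_neq0.
have k1 : 0 <= gamma / 2 * (gamma - r) ^+ 2 + eps * (r - gamma).
  apply: addr_ge0; first by apply: mulr_ge0; [lra|exact: sqr_ge0].
  by apply: mulr_ge0 => //; rewrite subr_ge0; exact: hr.
have : gamma * (r * (gamma - eps / gamma)) <= gamma * (gamma ^+ 2 / 2 + 2^-1 * r ^+ 2 - eps) by lra.
by rewrite ler_pM2l.
Qed.
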